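(* (Tur\'an's inequality for Hermite functions.) For every $k\in\mathbb{R}$ and every $x\ge L_k$, $$H_k(x)^2-H_{k-1}(x)H_{k+1}(x)>0,$$ where $L_k$ is the leftmost real zero of $H_k$ if $k>0$, and $L_k=-\infty$ (so the inequality holds on all of $\mathbb{R}$) if $k\le 0$.
   Context: For real $k$, the Hermite function $H_k:\mathbb{R}\to\mathbb{R}$ is the (unique) solution of $H_k''(x)-xH_k'(x)+kH_k(x)=0$ with $H_k(x)=x^k+o(x^k)$ as $x\to+\infty$; for nonnegative integers $k$ it is the monic probabilists' Hermite polynomial, and in general $H_k(x)=e^{x^2/4}D_k(x)$ with $D_k$ the parabolic cylinder function. For $k\le 0$, $H_k$ has no real zeros; for $n<k\le n+1$ ($n=0,1,\dots$), $H_k$ has exactly $n+1$ real zeros. *)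

(* Defs.v *)
From Stdlib Require Import Reals Lra.
Open Scope R_scope.

(* By the context such an H exists and is
   unique, so quantifying over all such H is the same as talking about H_k. *)
Definition is_hermite (k : R) (H : R -> R) : Prop :=
  exists H1 H2 : R -> R,
    (forall x, derivable_pt_lim H x (H1 x)) /\
    (forall x, derivable_pt_lim H1 x (H2 x)) /\
    (forall x, H2 x - x * H1 x + k * H x = 0) /\
    (forall eps, 0 < eps -> exists M, 0 < M /\
        forall x, M < x -> Rabs (H x / Rpower x k - 1) < eps).

Definition leftmost_zero (f : R -> R) (L : R) : Prop :=
  f L = 0 /\ forall y, f y = 0 -> L <= y.

(* Main.v *)
Require Import Defs.
From Stdlib Require Import Reals Lra FunctionalExtensionality.
From Coquelicot Require Import Coquelicot.
Open Scope R_scope.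

Lemma exp_le' : forall x y, x <= y -> exp x <= exp y.
Proof. intros x y H; destruct (Rle_lt_or_eq_dec _ _ H) as [h|h].
  left; apply exp_increasing; auto. subst; lra. Qed.

Lemma ln_le_x : forall x, 0 < x -> ln x <= x.
Proof. intros x Hx. pose proof (exp_ineq1_le (ln x)). rewrite exp_ln in H; lra. Qed.

Lemma D_eq : forall (f f' : R -> R), (forall y, is_derive f y (f' y)) ->
  forall y, Derive (fun z => f z) y = f' y.
Proof. intros. apply is_derive_unique. apply H. Qed.

Lemma mono_le : forall (f f' : R -> R) a b, (forall y, a <= y <= b -> is_derive f y (f' y)) -> a <= b ->
  (forall y, a <= y <= b -> f' y <= 0) -> f b <= f a.
Proof.
  intros f f' a b Hd Hab Hs. destruct (Rle_lt_or_eq_dec _ _ Hab) as [h|h].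
  - destruct (MVT_cor2 f f' a b h) as [c [Hc1 Hc2]].
    intros c Hc; apply is_derive_Reals; auto.
    assert (f' c <= 0) by (apply Hs; lra). nra.
  - subst; lra.
Qed.

Lemma mono_ge : forall (f f' : R -> R) a b, (forall y, a <= y <= b -> is_derive f y (f' y)) -> a <= b ->
  (forall y, a <= y <= b -> 0 <= f' y) -> f a <= f b.
Proof.
  intros f f' a b Hd Hab Hs. destruct (Rle_lt_or_eq_dec _ _ Hab) as [h|h].
  - destruct (MVT_cor2 f f' a b h) as [c [Hc1 Hc2]].
    intros c Hc; apply is_derive_Reals; auto.
    assert (0 <= f' c) by (apply Hs; lra). nra.
  - subst; lra.
Qed.

Lemma exp_dom : forall al be ga, 0 < al -> exists N, forall x, N <= x ->
  be * exp (ga * x) < al * exp (x ^ 2 / 2).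
Proof.
  intros al be ga Hal. destruct (Rle_lt_dec be 0) as [Hb|Hb].
  - exists 0. intros x _. pose proof (exp_pos (ga*x)). pose proof (exp_pos (x^2/2)). nra.
  - set (d := Rabs (ln be - ln al)). exists (2 * Rabs ga + 2 * d + 2).
    intros x Hx. assert (Hd : 0 <= d) by apply Rabs_pos.
    pose proof (Rabs_pos ga). 
    assert (x^2/2 >= x * (Rabs ga + d + 1)) by nra.
    assert (x * Rabs ga >= ga * x) by (pose proof (Rle_abs ga); pose proof (Rle_abs (-ga)); rewrite Rabs_Ropp in *; nra).
    assert (Hdd : ln be - ln al <= d) by (unfold d; apply Rle_abs).
    assert (x * d >= ln be - ln al) by nra.
    assert (ln be + ga * x < ln al + x^2/2) by nra.
    apply exp_increasing in H3. rewrite !exp_plus, !exp_ln in H3; auto.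
Qed.

Definition asym (c : R) (Y : R -> R) : Prop :=
  forall eps, 0 < eps -> exists M, 0 < M /\
        forall x, M < x -> Rabs (Y x / Rpower x c - 1) < eps.

Definition ode (c : R) (Y Y1 Y2 : R -> R) : Prop :=
  (forall x, is_derive Y x (Y1 x)) /\ (forall x, is_derive Y1 x (Y2 x)) /\
  (forall x, Y2 x = x * Y1 x - c * Y x).

Lemma herm_split : forall c Y, is_hermite c Y -> exists Y1 Y2, ode c Y Y1 Y2 /\ asym c Y.
Proof.
  intros c Y [Y1 [Y2 [h1 [h2 [h3 h4]]]]]. exists Y1, Y2. split; [|exact h4].
  split; [|split].
  - intro x; apply is_derive_Reals; auto.
  - intro x; apply is_derive_Reals; auto.
  - intro x; specialize (h3 x); lra.
Qed.

Lemma Rpower_pos : forall x c, 0 < Rpower x c.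
Proof. intros; unfold Rpower; apply exp_pos. Qed.

Lemma asym_P : forall c Y, asym c Y -> exists M, 1 <= M /\ forall x, M <= x ->
  Rpower x c / 2 < Y x < 2 * Rpower x c.
Proof.
  intros c Y H. destruct (H (1/2)) as [M [HM HH]]; [lra|].
  exists (M + 1). split; [lra|]. intros x Hx. specialize (HH x ltac:(lra)).
  pose proof (Rpower_pos x c). apply Rabs_def2 in HH. destruct HH as [h1 h2].
  assert (Y x / Rpower x c * Rpower x c = Y x) by (field; lra).
  split; nra.
Qed.

Lemma Rpower_bounds : forall x c, 1 <= x -> exp (- Rabs c * x) <= Rpower x c <= exp (Rabs c * x).
Proof.
  intros x c Hx. unfold Rpower. assert (0 <= ln x) by (rewrite <- ln_1; apply ln_le; lra).
  pose proof (ln_le_x x ltac:(lra)). pose proof (Rle_abs c). pose proof (Rle_abs (-c)). rewrite Rabs_Ropp in *.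
  split; apply exp_le'; nra.
Qed.

Lemma asym_bounds : forall c Y, asym c Y -> exists M, 1 <= M /\ forall x, M <= x ->
  0 < Y x /\ Y x <= 2 * exp (Rabs c * x) /\ exp (- Rabs c * x) / 2 <= Y x.
Proof.
  intros c Y H. destruct (asym_P c Y H) as [M [HM HH]]. exists M; split; auto.
  intros x Hx. specialize (HH x Hx). pose proof (Rpower_bounds x c ltac:(lra)).
  pose proof (Rpower_pos x c). lra.
Qed.

Lemma Rabs_le_inv : forall a b, Rabs a <= b -> - b <= a <= b.
Proof. intros a b H. pose proof (Rle_abs a). pose proof (Rle_abs (-a)). rewrite Rabs_Ropp in *. lra. Qed.

Definition Eg (y : R) := exp (- y^2/2).
Definition Ex (a y : R) := exp (a * y).
Lemma Eg_d : forall y:R, is_derive Eg y (- y * Eg y).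
Proof. intro y. unfold Eg. auto_derive; auto. assert (E : - (y * (y * 1)) * / 2 = - y^2/2) by (simpl; field). rewrite E. field. Qed.
Lemma Ex_d : forall a y:R, is_derive (Ex a) y (a * Ex a y).
Proof. intros a y. unfold Ex. auto_derive; auto. assert (E : a * y = y * a) by ring. rewrite Rmult_1_r, E. field. Qed.
Lemma Eg_pos : forall y, 0 < Eg y. Proof. intro; apply exp_pos. Qed.
Lemma Ex_pos : forall a y, 0 < Ex a y. Proof. intros; apply exp_pos. Qed.
Lemma Eg_inv : forall y, Eg y * exp (y^2/2) = 1.
Proof. intro y. unfold Eg. rewrite <- exp_plus. replace (- y^2/2 + y^2/2) with 0 by field. apply exp_0. Qed.

Lemma ex_Eg : forall y, ex_derive (fun z => Eg z) y.
Proof. intro y. exists (- y * Eg y). apply Eg_d. Qed.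
Lemma ex_Ex : forall a y, ex_derive (fun z => Ex a z) y.
Proof. intros a y. exists (a * Ex a y). apply Ex_d. Qed.
Lemma exd0 : forall (f f' : R -> R), (forall y, is_derive f y (f' y)) -> forall y, ex_derive (fun z => f z) y.
Proof. intros. exists (f' y). apply H. Qed.
Ltac sides := repeat split; try (eapply exd0; eassumption); try apply ex_Eg; try apply ex_Ex; auto.

Lemma exd : forall (f f' : R -> R), (forall y, is_derive f y (f' y)) -> forall y, ex_derive (fun z => f z) y.
Proof. intros. exists (f' y). apply H. Qed.

Lemma ode_zero : forall c D D1 D2 x0, ode c D D1 D2 -> D x0 = 0 -> D1 x0 = 0 -> forall x, D x = 0.
Proof.
  intros c D D1 D2 x0 [hD [hD1 hD2]] e0 e1 x.
  set (R := Rabs x + Rabs x0 + 1). set (K := 1 + Rabs c + 2 * R).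
  set (E := fun y => D y ^ 2 + D1 y ^ 2).
  set (E' := fun y => 2 * D y * D1 y + 2 * D1 y * D2 y).
  assert (HE : forall y, is_derive E y (E' y)).
  { intro y. unfold E, E'. auto_derive.
    - repeat split; eapply exd; eauto.
    - rewrite (D_eq _ _ hD), (D_eq _ _ hD1). ring. }
  assert (Hb : forall y, Rabs y <= R -> - K * E y <= E' y <= K * E y).
  { intros y Hy. unfold E, E', K. rewrite hD2.
    pose proof (Rabs_pos c). assert (0 <= R) by (unfold R; pose proof (Rabs_pos x); pose proof (Rabs_pos x0); lra).
    assert (-R <= y <= R) by (apply Rabs_le_inv; auto).
    assert (-Rabs c <= c <= Rabs c) by (apply Rabs_le_inv; lra).
    pose proof (pow2_ge_0 (D y - D1 y)). pose proof (pow2_ge_0 (D y + D1 y)).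
    pose proof (pow2_ge_0 (D y)). pose proof (pow2_ge_0 (D1 y)).
    split; nra. }
  assert (HE0 : E x0 = 0) by (unfold E; rewrite e0, e1; ring).
  assert (Hpos : forall y, 0 <= E y) by (intro y; unfold E; pose proof (pow2_ge_0 (D y)); pose proof (pow2_ge_0 (D1 y)); lra).
  assert (Ex : E x = 0).
  { destruct (Rle_lt_dec x0 x) as [h|h].
    - set (u := fun y => E y * exp (- K * y)).
      assert (u x <= u x0).
      { apply (mono_le u (fun y => (E' y - K * E y) * exp (- K * y))); auto.
        - intros y _. unfold u. auto_derive.
          + repeat split; eapply exd; eauto.
          + rewrite (D_eq _ _ HE). ring.
        - intros y Hy. assert (Rabs y <= R).
          { unfold R. apply Rabs_le. pose proof (Rle_abs x). pose proof (Rle_abs (-x0)). rewrite Rabs_Ropp in *. pose proof (Rabs_pos x). pose proof (Rabs_pos x0). lra. }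
          specialize (Hb y H). pose proof (exp_pos (-K*y)). nra. }
      unfold u in H. rewrite HE0 in H. pose proof (exp_pos (-K*x)). specialize (Hpos x). nra.
    - set (u := fun y => E y * exp (K * y)).
      assert (u x <= u x0).
      { apply (mono_ge u (fun y => (E' y + K * E y) * exp (K * y))); try lra.
        - intros y _. unfold u. auto_derive.
          + repeat split; eapply exd; eauto.
          + rewrite (D_eq _ _ HE). ring.
        - intros y Hy. assert (Rabs y <= R).
          { unfold R. apply Rabs_le. pose proof (Rle_abs x0). pose proof (Rle_abs (-x)). rewrite Rabs_Ropp in *. pose proof (Rabs_pos x). pose proof (Rabs_pos x0). lra. }
          specialize (Hb y H). pose proof (exp_pos (K*y)). nra. }
      unfold u in H. rewrite HE0 in H. pose proof (exp_pos (K*x)). specialize (Hpos x). nra. }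
  unfold E in Ex. pose proof (pow2_ge_0 (D x)). pose proof (pow2_ge_0 (D1 x)).
  nra.
Qed.

Definition ebnd (f : R -> R) : Prop :=
  exists M B A, forall x, M <= x -> Rabs (f x) <= B * exp (A * x).

Lemma ebnd_norm : forall f, ebnd f -> exists M B A, 0 <= M /\ 0 <= B /\ 0 <= A /\
  forall x, M <= x -> Rabs (f x) <= B * exp (A * x).
Proof.
  intros f [M [B [A H]]]. exists (Rmax M 0), (Rabs B), (Rabs A).
  split; [apply Rmax_r|]. split; [apply Rabs_pos|]. split; [apply Rabs_pos|].
  intros x Hx. pose proof (Rmax_l M 0). pose proof (Rmax_r M 0).
  specialize (H x ltac:(lra)). pose proof (Rle_abs B). pose proof (Rle_abs A).
  assert (exp (A*x) <= exp (Rabs A * x)) by (apply exp_le'; nra).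
  pose proof (exp_pos (A*x)). pose proof (Rabs_pos B). nra.
Qed.

Lemma ebnd_plus : forall f g, ebnd f -> ebnd g -> ebnd (fun x => f x + g x).
Proof.
  intros f g Hf Hg. apply ebnd_norm in Hf as [M1 [B1 [A1 [h1 [h2 [h3 Hf]]]]]].
  apply ebnd_norm in Hg as [M2 [B2 [A2 [g1 [g2 [g3 Hg]]]]]].
  exists (Rmax M1 M2), (B1 + B2), (A1 + A2). intros x Hx.
  pose proof (Rmax_l M1 M2). pose proof (Rmax_r M1 M2).
  specialize (Hf x ltac:(lra)). specialize (Hg x ltac:(lra)).
  assert (exp (A1*x) <= exp ((A1+A2) * x)) by (apply exp_le'; nra).
  assert (exp (A2*x) <= exp ((A1+A2) * x)) by (apply exp_le'; nra).
  pose proof (Rabs_triang (f x) (g x)). nra.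
Qed.

Lemma ebnd_mul : forall f g, ebnd f -> ebnd g -> ebnd (fun x => f x * g x).
Proof.
  intros f g Hf Hg. apply ebnd_norm in Hf as [M1 [B1 [A1 [h1 [h2 [h3 Hf]]]]]].
  apply ebnd_norm in Hg as [M2 [B2 [A2 [g1 [g2 [g3 Hg]]]]]].
  exists (Rmax M1 M2), (B1 * B2), (A1 + A2). intros x Hx.
  pose proof (Rmax_l M1 M2). pose proof (Rmax_r M1 M2).
  specialize (Hf x ltac:(lra)). specialize (Hg x ltac:(lra)).
  rewrite Rabs_mult. replace ((A1 + A2) * x) with (A1 * x + A2 * x) by ring. rewrite exp_plus.
  pose proof (Rabs_pos (f x)). pose proof (Rabs_pos (g x)).
  apply Rle_trans with (B1 * exp (A1 * x) * Rabs (g x)). apply Rmult_le_compat_r; auto.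
  pose proof (exp_pos (A1 * x)). nra.
Qed.

Lemma ebnd_id : ebnd (fun x => x).
Proof. exists 0, 1, 1. intros x Hx. rewrite Rabs_right by lra. rewrite !Rmult_1_l. pose proof (exp_ineq1_le x). lra. Qed.

Lemma ebnd_const : forall c, ebnd (fun _ => c).
Proof. intro c. exists 0, (Rabs c), 0. intros. rewrite Rmult_0_l, exp_0. lra. Qed.

Lemma ebnd_ext : forall f g, ebnd f -> (forall x, f x = g x) -> ebnd g.
Proof. intros f g [M [B [A H]]] E. exists M, B, A. intros x Hx. rewrite <- E. auto. Qed.

Lemma asym_ebnd : forall c Y, asym c Y -> ebnd Y.
Proof.
  intros c Y H. destruct (asym_bounds c Y H) as [M [HM HH]]. exists M, 2, (Rabs c).
  intros x Hx. destruct (HH x Hx) as [a [b _]]. rewrite Rabs_right; lra.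
Qed.


Lemma deriv_bound : forall c Y Y1 Y2, ode c Y Y1 Y2 -> asym c Y -> ebnd Y1.
Proof.
  intros c Y Y1 Y2 [hY [hY1 hY2]] Has.
  destruct (asym_bounds c Y Has) as [M [HM HB]].
  set (a := Rabs c). set (K0 := 2 * Rabs c + 1).
  assert (Ha : 0 <= a) by apply Rabs_pos.
  assert (HK0 : 1 <= K0) by (unfold K0; pose proof (Rabs_pos c); lra).
  set (N := Rmax M (a + 1)).
  assert (HN1 : M <= N) by apply Rmax_l. assert (HN2 : a + 1 <= N) by apply Rmax_r.
  exists N, K0, a. intros x Hx.
  set (g := fun y => Eg y * Y1 y).
  set (g' := fun y => - c * Eg y * Y y).
  set (ph := fun y => K0 * Ex a y * Eg y).
  set (ph' := fun y => K0 * (a - y) * Ex a y * Eg y).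
  assert (Hg : forall y, is_derive g y (g' y)).
  { intro y. unfold g, g'. auto_derive. split; [exists (- y * Eg y); apply Eg_d| split; [eapply exd; eauto| auto]].
    rewrite (D_eq _ _ hY1), hY2, (D_eq _ _ Eg_d). ring. }
  assert (Hph : forall y, is_derive ph y (ph' y)).
  { intro y. unfold ph, ph'. auto_derive. split; [exists (a * Ex a y); apply Ex_d| split; [exists (- y * Eg y); apply Eg_d| auto]].
    rewrite (D_eq _ _ Eg_d), (D_eq _ _ (Ex_d a)). ring. }
  assert (Hexa : forall y, Ex a y = exp (a * y)) by reflexivity.
  assert (Hcmp : forall y, N <= y -> Rabs (g' y) <= - ph' y).
  { intros y Hy. destruct (HB y ltac:(lra)) as [b1 [b2 b3]]. unfold g', ph'.
    pose proof (Eg_pos y). pose proof (Ex_pos a y). rewrite Hexa in *.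
    rewrite Rabs_mult, Rabs_mult, Rabs_Ropp, (Rabs_right (Eg _)), (Rabs_right (Y y)) by lra.
    fold a.
    assert (a * Eg y * Y y <= a * Eg y * (2 * exp (a*y))).
    { apply Rmult_le_compat_l; auto. nra. }
    assert (0 <= exp (a * y) * Eg y) by nra.
    assert (HK : K0 = 2 * a + 1) by reflexivity. rewrite HK.
assert (HQ : 0 <= (2*a+1) * (exp (a*y) * Eg y)) by nra.
    assert (1 <= y - a) by lra.
    assert ((2*a+1) * (y - a) * (exp (a*y) * Eg y) >= (2*a+1) * (exp (a*y) * Eg y)) by nra.
    nra. }
  destruct (HB x ltac:(lra)) as [bx1 [bx2 bx3]].
  pose proof (Eg_inv x). pose proof (Eg_pos x). pose proof (exp_pos (x^2/2)).
  assert (Hgx : Y1 x = g x * exp (x^2/2)) by (replace (g x * exp (x^2/2)) with (Y1 x * (Eg x * exp (x^2/2))) by (unfold g; ring); rewrite Eg_inv; ring).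
  assert (Hphx : ph x * exp (x^2/2) = K0 * exp (a * x)) by (replace (ph x * exp (x^2/2)) with (K0 * Ex a x * (Eg x * exp (x^2/2))) by (unfold ph; ring); rewrite Eg_inv, Hexa; ring).
  apply Rabs_le. split.
  - destruct (Rle_lt_dec (- (K0 * exp (a * x))) (Y1 x)) as [h|h]; [auto|exfalso].
    assert (Hd : 0 < - (g x + ph x)) by nra.
    set (d := - (g x + ph x)) in *.
    assert (Hle : forall y, x <= y -> g y + ph y <= - d).
    { intros y Hy. unfold d; rewrite Ropp_involutive. apply (mono_le (fun y => g y + ph y) (fun y => g' y + ph' y)); auto.
      - intros z _. apply (is_derive_plus g ph); auto.
      - intros z Hz. specialize (Hcmp z ltac:(lra)). apply Rabs_le_inv in Hcmp. lra. }
    assert (HY1 : forall y, x <= y -> Y1 y <= - d * exp (y^2/2)).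
    { intros y Hy. specialize (Hle y Hy). assert (0 < ph y) by (unfold ph; cbv beta; pose proof (Ex_pos a y); pose proof (Eg_pos y); apply Rmult_lt_0_compat; [apply Rmult_lt_0_compat|]; lra).
      pose proof (Eg_inv y) as Ei. pose proof (exp_pos (y^2/2)). unfold g in Hle; cbv beta in Hle.
      assert (Hm : (Eg y * Y1 y + ph y) * exp (y^2/2) <= - d * exp (y^2/2)) by (apply Rmult_le_compat_r; lra).
      replace ((Eg y * Y1 y + ph y) * exp (y^2/2)) with (Y1 y * (Eg y * exp (y^2/2)) + ph y * exp (y^2/2)) in Hm by ring.
      rewrite Ei in Hm. nra. }
    destruct (exp_dom d (2 * exp a) a Hd) as [N2 HN2'].
    set (y := Rmax N2 x). assert (y1 : N2 <= y) by apply Rmax_l. assert (y2 : x <= y) by apply Rmax_r.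
    destruct (MVT_cor2 Y Y1 y (y+1)) as [xi [Hxi1 Hxi2]]; [lra| intros; apply is_derive_Reals; auto |].
    specialize (HY1 xi ltac:(lra)).
    assert (exp (y^2/2) <= exp (xi^2/2)) by (apply exp_le'; nra).
    destruct (HB y ltac:(lra)) as [c1 [c2 c3]].
    assert (exp a >= 1) by (pose proof (exp_ineq1_le a); lra).
    specialize (HN2' y y1). pose proof (exp_pos (a*y)).
    destruct (HB (y+1) ltac:(lra)) as [e1 _]. fold a in c2. replace (y + 1 - y) with 1 in Hxi1 by ring.
    assert (d * exp (y^2/2) <= d * exp (xi^2/2)) by (apply Rmult_le_compat_l; lra).
    assert (2 * exp (a*y) <= 2 * exp a * exp (a*y)) by nra. lra.
  - destruct (Rle_lt_dec (Y1 x) (K0 * exp (a * x))) as [h|h]; [auto|exfalso].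
    assert (Hd : 0 < g x - ph x) by nra.
    set (d := g x - ph x) in *.
    assert (Hle : forall y, x <= y -> d <= g y - ph y).
    { intros y Hy. unfold d. apply (mono_ge (fun y => g y - ph y) (fun y => g' y - ph' y)); auto.
      - intros z _. apply (is_derive_minus g ph); auto.
      - intros z Hz. specialize (Hcmp z ltac:(lra)). apply Rabs_le_inv in Hcmp. lra. }
    assert (HY1 : forall y, x <= y -> d * exp (y^2/2) <= Y1 y).
    { intros y Hy. specialize (Hle y Hy). assert (0 < ph y) by (unfold ph; cbv beta; pose proof (Ex_pos a y); pose proof (Eg_pos y); apply Rmult_lt_0_compat; [apply Rmult_lt_0_compat|]; lra).
      pose proof (Eg_inv y) as Ei. pose proof (exp_pos (y^2/2)). unfold g in Hle; cbv beta in Hle.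
      assert (Hm : d * exp (y^2/2) <= (Eg y * Y1 y - ph y) * exp (y^2/2)) by (apply Rmult_le_compat_r; lra).
      replace ((Eg y * Y1 y - ph y) * exp (y^2/2)) with (Y1 y * (Eg y * exp (y^2/2)) - ph y * exp (y^2/2)) in Hm by ring.
      rewrite Ei in Hm. nra. }
    destruct (exp_dom d (2 * exp a) a Hd) as [N2 HN2'].
    set (y := Rmax N2 x). assert (y1 : N2 <= y) by apply Rmax_l. assert (y2 : x <= y) by apply Rmax_r.
    destruct (MVT_cor2 Y Y1 y (y+1)) as [xi [Hxi1 Hxi2]]; [lra| intros; apply is_derive_Reals; auto |].
    specialize (HY1 xi ltac:(lra)).
    assert (exp (y^2/2) <= exp (xi^2/2)) by (apply exp_le'; nra).
    destruct (HB (y+1) ltac:(lra)) as [c1 [c2 c3]].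
    assert (exp (Rabs c * (y+1)) = exp a * exp (a * y)) by (rewrite <- exp_plus; f_equal; unfold a; ring).
    specialize (HN2' y y1). pose proof (exp_pos (a*y)).
    destruct (HB y ltac:(lra)) as [e1 _]. nra.
Qed.

Lemma const_deriv0 : forall (f : R -> R), (forall y, is_derive f y 0) -> forall x, f x = f 0.
Proof.
  intros f H x. destruct (Rle_lt_dec 0 x).
  - pose proof (mono_le f (fun _ => 0) 0 x ltac:(auto) r ltac:(intros; lra)).
    pose proof (mono_ge f (fun _ => 0) 0 x ltac:(auto) r ltac:(intros; lra)). lra.
  - pose proof (mono_le f (fun _ => 0) x 0 ltac:(auto) ltac:(lra) ltac:(intros; lra)).
    pose proof (mono_ge f (fun _ => 0) x 0 ltac:(auto) ltac:(lra) ltac:(intros; lra)). lra.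
Qed.

Lemma ode_lin : forall c Y Y1 Y2 D D1 D2 a, ode c Y Y1 Y2 -> ode c D D1 D2 ->
  ode c (fun y => D y - a * Y y) (fun y => D1 y - a * Y1 y) (fun y => D2 y - a * Y2 y).
Proof.
  intros c Y Y1 Y2 D D1 D2 a [h1 [h2 h3]] [g1 [g2 g3]]. split; [|split].
  - intro y. auto_derive; [repeat split; eapply exd; eauto|]. rewrite (D_eq _ _ h1), (D_eq _ _ g1). ring.
  - intro y. auto_derive; [repeat split; eapply exd; eauto|]. rewrite (D_eq _ _ h2), (D_eq _ _ g2). ring.
  - intro y. rewrite h3, g3. ring.
Qed.

Lemma multiple : forall c Y Y1 Y2 D D1 D2, ode c Y Y1 Y2 -> asym c Y -> ode c D D1 D2 -> ebnd D ->
  exists a, forall x, D x = a * Y x.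
Proof.
  intros c Y Y1 Y2 D D1 D2 HY Has HD Hb.
  pose proof HY as [hY [hY1 hY2]]. pose proof HD as [hD [hD1 hD2]].
  set (W := fun y => Y y * D1 y - Y1 y * D y).
  assert (HW : forall y, is_derive (fun z => Eg z * W z) y 0).
  { intro y. unfold W. auto_derive.
    - sides.
    - rewrite (D_eq _ _ Eg_d), (D_eq _ _ hY), (D_eq _ _ hY1), (D_eq _ _ hD), (D_eq _ _ hD1), hY2, hD2. ring. }
  set (C := Eg 0 * W 0).
  assert (HWC : forall y, W y = C * exp (y^2/2)).
  { intro y. pose proof (const_deriv0 _ HW y). cbv beta in H. fold C in H.
    pose proof (Eg_inv y). rewrite <- H. transitivity (W y * (Eg y * exp (y^2/2))); [rewrite H0; ring| ring]. }
  destruct (asym_bounds c Y Has) as [M [HM HB]].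
  destruct (Req_dec C 0) as [HC|HC].
  - destruct (HB M ltac:(lra)) as [HY0 _].
    exists (D M / Y M). intro x.
    set (a := D M / Y M).
    pose proof (ode_lin c Y Y1 Y2 D D1 D2 a HY HD) as HE.
    assert (e0 : D M - a * Y M = 0) by (unfold a; field; lra).
    assert (e1 : D1 M - a * Y1 M = 0).
    { specialize (HWC M). rewrite HC, Rmult_0_l in HWC. unfold W in HWC. unfold a.
      apply (Rmult_eq_reg_l (Y M)); [|lra]. field_simplify; [|lra]. lra. }
    pose proof (ode_zero c _ _ _ M HE e0 e1 x). cbv beta in H. lra.
  - exfalso.
    apply ebnd_norm in Hb as [M2 [B [A [m1 [m2 [m3 Hb]]]]]].
    set (aa := Rabs c). assert (Haa : 0 <= aa) by apply Rabs_pos.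
    set (ga := A + 3 * aa).
    assert (HCp : 0 < Rabs C) by (apply Rabs_pos_lt; auto).
    destruct (exp_dom (Rabs C) (16 * B * exp ga) ga HCp) as [N2 HN2].
    set (x := Rmax (Rmax M M2) N2).
    assert (x1 : M <= x) by (unfold x; pose proof (Rmax_l (Rmax M M2) N2); pose proof (Rmax_l M M2); lra).
    assert (x2 : M2 <= x) by (unfold x; pose proof (Rmax_l (Rmax M M2) N2); pose proof (Rmax_r M M2); lra).
    assert (x3 : N2 <= x) by (unfold x; apply Rmax_r).
    set (rho := fun y => D y / Y y).
    destruct (MVT_cor2 rho (fun y => W y / (Y y)^2) x (x+1)) as [xi [Hxi1 Hxi2]]; [lra| |].
    { intros z Hz. apply is_derive_Reals. destruct (HB z ltac:(lra)) as [p _].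
      unfold rho, W. auto_derive.
      - sides; lra.
      - rewrite (D_eq _ _ hY), (D_eq _ _ hD). field; lra. }
    replace (x + 1 - x) with 1 in Hxi1 by ring. rewrite Rmult_1_r in Hxi1.
    assert (Hrho : forall z, x <= z <= x + 1 -> Rabs (rho z) <= 2 * B * exp ((A + aa) * (x + 1))).
    { intros z Hz. destruct (HB z ltac:(lra)) as [p1 [p2 p3]].
      specialize (Hb z ltac:(lra)). unfold rho. rewrite Rabs_div by lra. rewrite (Rabs_right (Y z)) by lra.
      apply Rmult_le_reg_r with (Y z); [lra|]. unfold Rdiv. rewrite Rmult_assoc, Rinv_l, Rmult_1_r by lra.
      assert (Hs : exp (A * z) = exp ((A + aa) * z) * exp (- Rabs c * z)) by (rewrite <- exp_plus; f_equal; unfold aa; ring).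
      assert (exp ((A+aa) * z) <= exp ((A + aa) * (x+1))) by (apply exp_le'; nra).
      pose proof (exp_pos ((A+aa)*z)). pose proof (exp_pos (- Rabs c * z)). rewrite Hs in Hb.
      assert (B * (exp ((A + aa) * z) * exp (- Rabs c * z)) <= B * (exp ((A + aa) * z) * (2 * Y z))) by (apply Rmult_le_compat_l; [lra|]; apply Rmult_le_compat_l; lra).
      assert (B * (exp ((A + aa) * z) * (2 * Y z)) <= B * (exp ((A + aa) * (x+1)) * (2 * Y z))) by (apply Rmult_le_compat_l; [lra|]; apply Rmult_le_compat_r; lra).
      lra. }
    pose proof (Hrho x ltac:(lra)). pose proof (Hrho (x+1) ltac:(lra)).
    assert (Hdiff : Rabs (W xi / Y xi ^ 2) <= 4 * B * exp ((A + aa) * (x + 1))).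
    { rewrite <- Hxi1. pose proof (Rabs_triang (rho (x+1)) (- rho x)). rewrite Rabs_Ropp in H1. unfold Rminus. lra. }
    destruct (HB xi ltac:(lra)) as [q1 [q2 q3]].
    set (Q := exp (aa * (x + 1))).
    assert (HQ : Y xi <= 2 * Q) by (unfold Q; fold aa in q2; assert (exp (aa * xi) <= exp (aa * (x+1))) by (apply exp_le'; nra); lra).
    rewrite HWC in Hdiff. rewrite Rabs_div in Hdiff by (apply pow_nonzero; lra).
    rewrite Rabs_mult, (Rabs_right (exp _)), (Rabs_right (Y xi ^ 2)) in Hdiff by (try apply Rle_ge, pow2_ge_0; left; apply exp_pos).
    assert (Hx2 : exp (x^2/2) <= exp (xi^2/2)) by (apply exp_le'; nra).
    assert (HY2 : Y xi ^ 2 <= 4 * Q ^ 2) by nra.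
    assert (Hpos : 0 < Y xi ^ 2) by nra.
    assert (H5 : Rabs C * exp (xi ^ 2 / 2) <= 4 * B * exp ((A + aa) * (x + 1)) * Y xi ^ 2).
    { apply Rmult_le_reg_r with (/ Y xi ^ 2); [apply Rinv_0_lt_compat; lra|].
      rewrite (Rmult_assoc (4 * B * _)), Rinv_r, Rmult_1_r by lra. exact Hdiff. }
    assert (H6 : exp ((A + aa) * (x + 1)) * Q ^ 2 = exp ga * exp (ga * x)).
    { unfold Q. simpl. rewrite Rmult_1_r, <- !exp_plus. f_equal. unfold ga. ring. }
    specialize (HN2 x x3).
    pose proof (exp_pos ((A + aa) * (x + 1))).
    assert (4 * B * exp ((A + aa) * (x + 1)) * Y xi ^ 2 <= 4 * B * exp ((A + aa) * (x + 1)) * (4 * Q^2)) by (apply Rmult_le_compat_l; nra).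
    assert (Rabs C * exp (x^2/2) <= Rabs C * exp (xi^2/2)) by (apply Rmult_le_compat_l; lra).
    nra.
Qed.

Lemma Rpower_m1 : forall y c, 0 < y -> Rpower y (c - 1) * y = Rpower y c.
Proof.
  intros y c Hy. unfold Rpower. replace ((c-1) * ln y) with (c * ln y + - ln y) by ring.
  rewrite exp_plus, exp_Ropp, exp_ln by auto. field. lra.
Qed.

Lemma const_one : forall (c : R) (Y Y1 Z : R -> R) (a : R), asym (c-1) Y -> asym c Z -> (forall y, is_derive Y y (Y1 y)) ->
  (forall y, Y1 y = y * Y y - a * Z y) -> a = 1.
Proof.
  intros c Y Y1 Z a HY HZ hY hY1.
  destruct (Req_dec a 1) as [e|ne]; auto. exfalso.
  set (e := Rabs (1 - a)). assert (He : 0 < e) by (apply Rabs_pos_lt; lra).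
  pose proof (Rabs_pos a) as Hap.
  set (eps := e / (4 * (1 + Rabs a))).
  assert (Heps : 0 < eps) by (unfold eps; apply Rdiv_lt_0_compat; lra).
  assert (Heps2 : eps * (1 + Rabs a) = e / 4) by (unfold eps; field; lra).
  destruct (HY eps Heps) as [M1 [HM1 HY']]. destruct (HZ eps Heps) as [M2 [HM2 HZ']].
  destruct (asym_P _ _ HY) as [M3 [HM3 HY3]].
  set (P := fun y => Rpower y c).
  assert (Hlow : forall y, Rmax M1 M2 < y -> e / 2 * P y <= Rabs (Y1 y)).
  { intros y Hy. pose proof (Rmax_l M1 M2). pose proof (Rmax_r M1 M2).
    specialize (HY' y ltac:(lra)). specialize (HZ' y ltac:(lra)).
    assert (Hy0 : 0 < y) by lra. pose proof (Rpower_m1 y c Hy0) as Hm. fold (P y) in Hm.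
    pose proof (Rpower_pos y (c-1)). pose proof (Rpower_pos y c). fold (P y) in H2.
    change (Rpower y c) with (P y) in HZ'.
    set (u := Y y / Rpower y (c-1)) in *. set (v := Z y / P y) in *.
    assert (Hu : Y y = u * Rpower y (c-1)) by (unfold u; field; lra).
    assert (Hvv : Z y = v * P y) by (unfold v; unfold Rdiv; rewrite Rmult_assoc, Rinv_l, Rmult_1_r; [reflexivity| apply Rgt_not_eq; lra]).
    assert (HY1' : Y1 y = (u - a * v) * P y) . { rewrite hY1, Hu, Hvv, <- Hm. ring. }
    rewrite HY1', Rabs_mult, (Rabs_right (P y)) by lra.
    apply Rmult_le_compat_r; [lra|].
    replace (u - a * v) with ((1 - a) + (u - 1) - a * (v - 1)) by ring.
    pose proof (Rabs_triang_inv ((1 - a) + (u - 1)) (a * (v - 1))).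
    pose proof (Rabs_triang_inv (1 - a) (- (u - 1))). rewrite Rabs_Ropp in H4.
    replace (1 - a - - (u - 1)) with (1 - a + (u - 1)) in H4 by ring.
    rewrite Rabs_mult in H3.
    assert (Rabs a * Rabs (v - 1) <= Rabs a * eps) by (apply Rmult_le_compat_l; lra).
    fold e in H4. lra. }
  set (m := exp (- Rabs c * ln 2)). set (m' := exp (Rabs c * ln 2)).
  assert (Hm : 0 < m) by apply exp_pos. assert (Hm' : 0 < m') by apply exp_pos.
  set (K := 2 * (m' + 2) / (e * m)).
  set (x := Rmax (Rmax (Rmax M1 M2) M3) (Rabs K) + 1).
  assert (Hx1 : Rmax M1 M2 < x) by (unfold x; pose proof (Rmax_l (Rmax (Rmax M1 M2) M3) (Rabs K)); pose proof (Rmax_l (Rmax M1 M2) M3); lra).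
  assert (Hx3 : M3 <= x) by (unfold x; pose proof (Rmax_l (Rmax (Rmax M1 M2) M3) (Rabs K)); pose proof (Rmax_r (Rmax M1 M2) M3); lra).
  assert (HxK : K < x) by (unfold x; pose proof (Rmax_r (Rmax (Rmax M1 M2) M3) (Rabs K)); pose proof (Rle_abs K); lra).
  assert (Hx0 : 1 <= x) by lra.
  destruct (MVT_cor2 Y Y1 x (2 * x)) as [xi [Hxi1 Hxi2]]; [lra| intros; apply is_derive_Reals; auto |].
  replace (2 * x - x) with x in Hxi1 by ring.
  specialize (Hlow xi ltac:(lra)).
  assert (HPxi : m * P x <= P xi).
  { unfold m, P, Rpower. rewrite <- exp_plus. apply exp_le'.
    assert (ln x <= ln xi) by (apply ln_le; lra).
    assert (ln xi <= ln (2 * x)) by (apply ln_le; lra).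
    rewrite ln_mult in H0 by lra. assert (0 < ln 2) by (rewrite <- ln_1; apply ln_increasing; lra).
    pose proof (Rle_abs c). pose proof (Rle_abs (-c)). rewrite Rabs_Ropp in H3. nra. }
  assert (HP2x : P (2 * x) <= m' * P x).
  { unfold m', P, Rpower. rewrite <- exp_plus. apply exp_le'. rewrite ln_mult by lra.
    assert (0 < ln 2) by (rewrite <- ln_1; apply ln_increasing; lra).
    pose proof (Rle_abs c). nra. }
  destruct (HY3 x Hx3) as [a1 a2]. destruct (HY3 (2*x) ltac:(lra)) as [b1 b2].
  pose proof (Rpower_m1 x c ltac:(lra)). pose proof (Rpower_m1 (2*x) c ltac:(lra)). fold (P x) (P (2*x)) in H, H0.
  pose proof (Rpower_pos x (c-1)). pose proof (Rpower_pos (2*x) (c-1)).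
  assert (HPx : 0 < P x) by apply Rpower_pos.
  assert (Hup : Rabs (Y1 xi) * x <= 2 * Rpower (2*x) (c-1) + 2 * Rpower x (c-1)).
  { replace (Rabs (Y1 xi) * x) with (Rabs (Y1 xi * x)) by (rewrite Rabs_mult, (Rabs_right x) by lra; reflexivity).
    rewrite <- Hxi1.
    apply Rabs_le. lra. }
  assert (Hup2 : (Rabs (Y1 xi) * x) * x <= (m' + 2) * P x).
  { apply Rle_trans with ((2 * Rpower (2*x) (c-1) + 2 * Rpower x (c-1)) * x). apply Rmult_le_compat_r; lra.
    assert (2 * Rpower (2*x) (c-1) * x = P (2 * x)) by (rewrite <- H0; ring).
    nra. }
  assert (e / 2 * (m * P x) * x * x <= (m' + 2) * P x).
  { apply Rle_trans with (Rabs (Y1 xi) * x * x); [|auto].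
    assert (e/2 * (m * P x) <= Rabs (Y1 xi)) by (apply Rle_trans with (e/2 * P xi); [apply Rmult_le_compat_l; lra| auto]).
    nra. }
  assert (HK : K * (e * m) = 2 * (m' + 2)) by (unfold K; field; lra).
  assert (e * m * x * x <= 2 * (m' + 2)) by (apply Rmult_le_reg_r with (P x); [auto| nra]).
  assert (0 < e * m) by nra.
  assert (K * (e * m) < x * (e * m)) by (apply Rmult_lt_compat_r; auto).
  assert (K >= 0) by (unfold K; apply Rle_ge; apply Rdiv_le_0_compat; lra).
  nra.
Qed.

Lemma ode_shift : forall c Y Y1 Y2, ode c Y Y1 Y2 ->
  ode (c + 1) (fun x => x * Y x - Y1 x) (fun x => (c+1) * Y x) (fun x => (c+1) * Y1 x).
Proof.
  intros c Y Y1 Y2 [h1 [h2 h3]]. split; [|split].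
  - intro y. auto_derive; [sides|]. rewrite (D_eq _ _ h1), (D_eq _ _ h2), h3. ring.
  - intro y. auto_derive; [sides|]. rewrite (D_eq _ _ h1). ring.
  - intro y. ring.
Qed.

Lemma relation : forall c Y Y1 Y2 Z Z1 Z2, ode (c-1) Y Y1 Y2 -> asym (c-1) Y -> ode c Z Z1 Z2 -> asym c Z ->
  forall x, Z x = x * Y x - Y1 x.
Proof.
  intros c Y Y1 Y2 Z Z1 Z2 HY aY HZ aZ.
  pose proof (ode_shift _ _ _ _ HY) as HF. replace (c - 1 + 1) with c in HF by ring.
  assert (Hb : ebnd (fun x => x * Y x - Y1 x)).
  { apply ebnd_ext with (fun x => x * Y x + (-1) * Y1 x); [|intro; ring].
    apply ebnd_plus; apply ebnd_mul.
    - apply ebnd_id.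
    - eapply asym_ebnd; eauto.
    - apply ebnd_const.
    - eapply deriv_bound; eauto. }
  destruct (multiple c Z Z1 Z2 _ _ _ HZ aZ HF Hb) as [a Ha].
  assert (a = 1).
  { apply (const_one c Y Y1 Z a aY aZ).
    - destruct HY as [h _]; exact h.
    - intro y. specialize (Ha y). lra. }
  subst a. intro x. specialize (Ha x). lra.
Qed.

Lemma lim_Eg : forall f, ebnd f -> forall eps, 0 < eps -> exists N, forall y, N <= y -> Rabs (Eg y * f y) < eps.
Proof.
  intros f Hf eps He. apply ebnd_norm in Hf as [M [B [A [h1 [h2 [h3 Hf]]]]]].
  destruct (exp_dom eps B A He) as [N HN]. exists (Rmax M N). intros y Hy.
  pose proof (Rmax_l M N). pose proof (Rmax_r M N).
  specialize (Hf y ltac:(lra)). specialize (HN y ltac:(lra)).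
  rewrite Rabs_mult, (Rabs_right (Eg y)) by (left; apply Eg_pos).
  pose proof (Eg_pos y). pose proof (Eg_inv y).
  apply Rle_lt_trans with (Eg y * (B * exp (A * y))). apply Rmult_le_compat_l; lra.
  apply Rlt_le_trans with (Eg y * (eps * exp (y^2/2))). apply Rmult_lt_compat_l; lra.
  nra.
Qed.

Lemma nonincr_nonneg : forall (f f' : R -> R), (forall y, is_derive f y (f' y)) -> (forall y, f' y <= 0) ->
  (forall eps, 0 < eps -> exists N, forall y, N <= y -> Rabs (f y) < eps) -> forall x, 0 <= f x.
Proof.
  intros f f' Hd Hs Hl x. destruct (Rle_lt_dec 0 (f x)) as [h|h]; auto. exfalso.
  destruct (Hl (- f x) ltac:(lra)) as [N HN]. set (y := Rmax N x).
  pose proof (Rmax_l N x). pose proof (Rmax_r N x). specialize (HN y ltac:(unfold y; lra)).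
  pose proof (mono_le f f' x y ltac:(auto) ltac:(unfold y; lra) ltac:(auto)).
  apply Rabs_def2 in HN. lra.
Qed.

Lemma endpoint : forall (g : R -> R) l a b, is_derive g a l -> l < 0 -> a < b ->
  (forall y, a <= y <= b -> g a <= g y) -> False.
Proof.
  intros g l a b Hd Hl Hab Hm. apply is_derive_Reals in Hd.
  destruct (Hd (- l / 2) ltac:(lra)) as [del Hdel].
  set (h := Rmin (del / 2) (b - a)).
  assert (hp : 0 < h) by (unfold h; apply Rmin_case; pose proof (cond_pos del); lra).
  assert (hb : h <= b - a) by apply Rmin_r.
  assert (hd : h < del) by (pose proof (Rmin_l (del/2) (b-a)); pose proof (cond_pos del); fold h in H; lra).
  specialize (Hdel h ltac:(lra) ltac:(rewrite Rabs_right; lra)).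
  apply Rabs_def2 in Hdel. destruct Hdel as [Hdel _].
  specialize (Hm (a + h) ltac:(lra)).
  assert ((g (a + h) - g a) / h >= 0) by (apply Rle_ge; apply Rdiv_le_0_compat; lra).
  lra.
Qed.

Lemma no_return : forall (g g' : R -> R) a b, (forall y, is_derive g y (g' y)) -> a < b -> g a <= 0 ->
  (forall y, a <= y <= b -> g y <= 0 -> g' y < 0) -> g b < 0.
Proof.
  intros g g' a b Hd Hab Ha Hs. destruct (Rlt_le_dec (g b) 0) as [h|h]; auto. exfalso.
  assert (Hc : forall c, a <= c <= b -> continuity_pt g c).
  { intros c _. apply derivable_continuous_pt. exists (g' c). apply is_derive_Reals; auto. }
  destruct (continuity_ab_min g a b ltac:(lra) Hc) as [c [Hmin Hcab]].
  destruct (Rlt_le_dec (g c) (g a)) as [lt|ge].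
  - assert (c <> a) by (intro; subst; lra). assert (c <> b) by (intro; subst; lra).
    assert (Hd0 : derive_pt g c (exist _ (g' c) (proj1 (is_derive_Reals _ _ _) (Hd c))) = 0).
    { apply (deriv_minimum g a b c); try lra. intros y h1 h2. apply Hmin; lra. }
    simpl in Hd0. specialize (Hs c ltac:(lra) ltac:(lra)). lra.
  - apply (endpoint g (g' a) a b (Hd a) (Hs a ltac:(lra) Ha) Hab).
    intros y Hy. specialize (Hmin y Hy). lra.
Qed.

Lemma no_return_left : forall (g g' : R -> R) a b, (forall y, is_derive g y (g' y)) -> a < b -> g b <= 0 ->
  (forall y, a <= y <= b -> g y <= 0 -> 0 < g' y) -> g a < 0.
Proof.
  intros g g' a b Hd Hab Hb Hs.
  pose proof (no_return (fun y => g (- y)) (fun y => - g' (- y)) (- b) (- a)) as N.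
  cbv beta in N. rewrite !Ropp_involutive in N. apply N; clear N.
  - intro y. auto_derive. eapply exd0; eauto. rewrite (D_eq _ _ Hd). ring.
  - lra.
  - auto.
  - intros y Hy Hg. specialize (Hs (- y) ltac:(lra) Hg). lra.
Qed.

Theorem lemma2 :
  forall (k : R) (Hm H Hp : R -> R),
    is_hermite (k - 1) Hm -> is_hermite k H -> is_hermite (k + 1) Hp ->
    forall x : R,
      (k <= 0 \/ (0 < k /\ exists L, leftmost_zero H L /\ L <= x)) ->
      H x ^ 2 - Hm x * Hp x > 0.
Proof.
  intros k Hm H Hp hm h hp x Hcase.
  destruct (herm_split _ _ hm) as [Hm1 [Hm2 [oHm aHm]]].
  destruct (herm_split _ _ h) as [H1 [H2 [oH aH]]].
  destruct (herm_split _ _ hp) as [Hp1 [Hp2 [oHp aHp]]].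
  pose proof (relation k Hm Hm1 Hm2 H H1 H2 oHm aHm oH aH) as R1.
  assert (oH' : ode (k + 1 - 1) H H1 H2) by (replace (k+1-1) with k by ring; auto).
  assert (aH' : asym (k + 1 - 1) H) by (replace (k+1-1) with k by ring; auto).
  pose proof (relation (k+1) H H1 H2 Hp Hp1 Hp2 oH' aH' oHp aHp) as R2.
  pose proof oHm as [dHm [dHm1 eHm2]]. pose proof oH as [dH [dH1 eH2]].
  assert (R3 : forall y, H1 y = k * Hm y).
  { intro y. rewrite <- (is_derive_unique _ _ _ (dH y)).
    apply is_derive_unique. apply (is_derive_ext (fun z => z * Hm z - Hm1 z)). intro t; rewrite R1; auto.
    auto_derive; [sides|]. rewrite (D_eq _ _ dHm), (D_eq _ _ dHm1), eHm2. ring. }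
  assert (R4 : forall y, Hm1 y = y * Hm y - H y) by (intro y; rewrite R1; ring).
  set (T := fun y => H y ^ 2 - y * H y * Hm y + k * Hm y ^ 2).
  assert (HT : H x ^ 2 - Hm x * Hp x = T x) by (unfold T; rewrite R2, R3; ring).
  rewrite HT. apply Rlt_gt.
  set (g := fun y => Eg y * T y).
  set (g' := fun y => - Eg y * H y * Hm y).
  assert (Hg : forall y, is_derive g y (g' y)).
  { intro y. unfold g, g', T. auto_derive; [sides|].
    rewrite (D_eq _ _ Eg_d), (D_eq _ _ dH), (D_eq _ _ dHm), R3, R4. ring. }
  assert (NZ : forall p, H p = 0 -> Hm p = 0 -> False).
  { intros p e1 e2. assert (e3 : H1 p = 0) by (rewrite R3, e2; ring).
    pose proof (ode_zero k H H1 H2 p oH e1 e3).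
    destruct (asym_bounds k H aH) as [M [HM HB]]. destruct (HB M ltac:(lra)) as [z _].
    rewrite H0 in z. lra. }
  destruct (asym_bounds k H aH) as [MH [HMH HBH]].
  destruct (asym_bounds (k-1) Hm aHm) as [Mm [HMm HBm]].
  destruct Hcase as [Hk | [Hk [L [[HL _] HLx]]]].
  -
    set (pp := fun y => Eg y * (H y * Hm y)).
    set (pp' := fun y => Eg y * (k * Hm y ^ 2 - H y ^ 2)).
    assert (Hpp : forall y, is_derive pp y (pp' y)).
    { intro y. unfold pp, pp'. auto_derive; [sides|].
      rewrite (D_eq _ _ Eg_d), (D_eq _ _ dH), (D_eq _ _ dHm), R3, R4. ring. }
    assert (Hpp0 : forall y, 0 <= pp y).
    { apply (nonincr_nonneg pp pp' Hpp).
      - intro y. unfold pp'; cbv beta. pose proof (Eg_pos y). pose proof (pow2_ge_0 (Hm y)). pose proof (pow2_ge_0 (H y)). assert (k * Hm y ^ 2 - H y ^ 2 <= 0) by nra. nra.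
      - apply lim_Eg. apply ebnd_mul; eapply asym_ebnd; eauto. }
    assert (Hhu : forall y, 0 < H y * Hm y).
    { intro y. set (z := Rmax y (Rmax MH Mm)).
      pose proof (Rmax_l y (Rmax MH Mm)). pose proof (Rmax_r y (Rmax MH Mm)).
      pose proof (Rmax_l MH Mm). pose proof (Rmax_r MH Mm).
      destruct (HBH z ltac:(unfold z; lra)) as [c1 _]. destruct (HBm z ltac:(unfold z; lra)) as [c2 _].
      assert (Hpz0 : 0 < pp z) by (unfold pp; pose proof (Eg_pos z); apply Rmult_lt_0_compat; nra).
      assert (Hpz : pp z <= pp y).
      { apply (mono_le pp pp' y z); [intros; auto | unfold z; apply Rmax_l | ].
        intros t _. unfold pp'; cbv beta. pose proof (Eg_pos t). pose proof (pow2_ge_0 (Hm t)). pose proof (pow2_ge_0 (H t)). assert (k * Hm t ^ 2 - H t ^ 2 <= 0) by nra. nra. }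
      unfold pp in Hpz, Hpz0; cbv beta in Hpz, Hpz0. pose proof (Eg_pos y).
      destruct (Rlt_le_dec 0 (H y * Hm y)) as [ok|bad]; auto.
      assert (Eg y * (H y * Hm y) <= 0) by (replace (Eg y * (H y * Hm y)) with (- (Eg y * - (H y * Hm y))) by ring; assert (0 <= Eg y * - (H y * Hm y)) by (apply Rmult_le_pos; lra); lra). lra. }
    assert (Hg0 : forall y, 0 <= g y).
    { apply (nonincr_nonneg g g' Hg).
      - intro y. unfold g'; cbv beta. pose proof (Eg_pos y). specialize (Hhu y). nra.
      - apply lim_Eg. unfold T.
        apply ebnd_ext with (fun y => H y * H y + ((-1) * (y * (H y * Hm y)) + k * (Hm y * Hm y))); [|intro; ring].
        assert (eH : ebnd H) by (eapply asym_ebnd; eauto).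
        assert (eHm : ebnd Hm) by (eapply asym_ebnd; eauto).
        repeat apply ebnd_plus; repeat apply ebnd_mul; auto using ebnd_id, ebnd_const. }
    destruct (MVT_cor2 g g' x (x+1)) as [xi [Hxi1 Hxi2]]; [lra| intros; apply is_derive_Reals; auto |].
    assert (g' xi < 0) by (unfold g'; cbv beta; pose proof (Eg_pos xi); specialize (Hhu xi); nra).
    specialize (Hg0 (x+1)). assert (Hgx : 0 < g x) by nra.
    unfold g in Hgx; cbv beta in Hgx; cbv beta in Hgx. pose proof (Eg_pos x).
    destruct (Rlt_le_dec 0 (T x)) as [ok|bad]; auto.
    assert (Eg x * T x <= 0) by (replace (Eg x * T x) with (- (Eg x * - T x)) by ring; assert (0 <= Eg x * - T x) by (apply Rmult_le_pos; lra); lra). lra.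
  -
    destruct (Rlt_le_dec 0 (T x)) as [Tp|Tn]; auto. exfalso.
    assert (Key : forall y, T y <= 0 -> 0 < y * H y * Hm y).
    { intros y Ty. unfold T in Ty.
      assert (0 < H y ^ 2 + k * Hm y ^ 2).
      { destruct (Req_dec (H y) 0) as [e1|e1].
        - destruct (Req_dec (Hm y) 0) as [e2|e2]; [exfalso; eapply NZ; eauto|].
          assert (0 < Hm y ^ 2) by (apply pow2_gt_0; auto). pose proof (pow2_ge_0 (H y)). nra.
        - assert (0 < H y ^ 2) by (apply pow2_gt_0; auto). pose proof (pow2_ge_0 (Hm y)). nra. }
      lra. }
    assert (HTL : 0 <= T L) by (unfold T; rewrite HL; pose proof (pow2_ge_0 (Hm L)); nra).
    pose proof (Key x Tn) as Kx.
    destruct (Rtotal_order x 0) as [xneg | [x0 | xpos]].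
    +
      assert (Lx : L < x).
      { destruct (Rle_lt_or_eq_dec _ _ HLx); auto. subst. rewrite HL in Kx. nra. }
      assert (g L < 0).
      { apply (no_return_left g g' L x Hg Lx).
        - unfold g; cbv beta. pose proof (Eg_pos x). nra.
        - intros y Hy Gy. assert (T y <= 0) by (unfold g in Gy; cbv beta in Gy; pose proof (Eg_pos y); nra).
          specialize (Key y H0). unfold g'; cbv beta. pose proof (Eg_pos y).
          assert (H y * Hm y < 0) by nra. nra. }
      unfold g in H0; cbv beta in H0. pose proof (Eg_pos L). nra.
    + subst. lra.
    +
      assert (Fw : forall y, x < y -> T y < 0).
      { intros y Hy. assert (g y < 0).
        { apply (no_return g g' x y Hg Hy).
          - unfold g; cbv beta. pose proof (Eg_pos x). nra.
          - intros z Hz Gz. assert (T z <= 0) by (unfold g in Gz; cbv beta in Gz; pose proof (Eg_pos z); nra).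
            specialize (Key z H0). unfold g'; cbv beta. pose proof (Eg_pos z).
            assert (0 < H z * Hm z) by nra. nra. }
        unfold g in H0; cbv beta in H0. pose proof (Eg_pos y). nra. }
      assert (Hpos : forall y, x < y -> 0 < H y * Hm y).
      { intros y Hy. pose proof (Key y (Rlt_le _ _ (Fw y Hy))). nra. }
      assert (Hnz : forall y, x < y -> H y <> 0).
      { intros y Hy e. specialize (Hpos y Hy). rewrite e in Hpos. lra. }
      set (r := fun y => Hm y / H y).
      set (x1 := x + 1).
      assert (r1 : 0 < r x1).
      { unfold r. specialize (Hpos x1 ltac:(unfold x1; lra)).
        replace (Hm x1 / H x1) with (H x1 * Hm x1 / (H x1 ^ 2)) by (field; apply Hnz; unfold x1; lra).
        apply Rdiv_lt_0_compat; auto. apply pow2_gt_0. apply Hnz; unfold x1; lra. }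
      assert (Hinc : forall y, x1 < y -> r x1 < r y).
      { intros y Hy.
        destruct (MVT_cor2 r (fun z => - T z / H z ^ 2) x1 y Hy) as [xi [Hxi1 Hxi2]].
        { intros z Hz. apply is_derive_Reals. assert (H z <> 0) by (apply Hnz; unfold x1 in *; lra).
          unfold r, T. auto_derive. sides.
          rewrite (D_eq _ _ dH), (D_eq _ _ dHm), R3, R4. field. auto. }
        assert (T xi < 0) by (apply Fw; unfold x1 in *; lra).
        assert (0 < H xi ^ 2) by (apply pow2_gt_0; apply Hnz; unfold x1 in *; lra).
        assert (0 < - T xi / H xi ^ 2) by (apply Rdiv_lt_0_compat; lra).
        nra. }
      set (y := Rmax (Rmax (x1 + 1) (Rmax MH Mm)) (4 / r x1 + 1)).
      assert (y1 : x1 + 1 <= y) by (unfold y; pose proof (Rmax_l (Rmax (x1 + 1) (Rmax MH Mm)) (4 / r x1 + 1)); pose proof (Rmax_l (x1+1) (Rmax MH Mm)); lra).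
      assert (y2 : Rmax MH Mm <= y) by (unfold y; pose proof (Rmax_l (Rmax (x1 + 1) (Rmax MH Mm)) (4 / r x1 + 1)); pose proof (Rmax_r (x1+1) (Rmax MH Mm)); lra).
      assert (y3 : 4 / r x1 + 1 <= y) by (unfold y; apply Rmax_r).
      pose proof (Rmax_l MH Mm). pose proof (Rmax_r MH Mm).
      specialize (Hinc y ltac:(lra)).
      destruct (asym_P _ _ aH) as [N1 [HN1 HP1]]. destruct (asym_P _ _ aHm) as [N2 [HN2 HP2]].
      set (w := Rmax y (Rmax N1 N2)).
      assert (wy : y <= w) by (unfold w; apply Rmax_l). assert (wN : Rmax N1 N2 <= w) by (unfold w; apply Rmax_r).
      pose proof (Rmax_l N1 N2). pose proof (Rmax_r N1 N2).
      assert (Hw : r x1 < r w).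
      { destruct (Rle_lt_or_eq_dec y w) as [l|e]; [exact wy| |].
        - apply (Rlt_trans _ (r y)); auto.
          destruct (MVT_cor2 r (fun z => - T z / H z ^ 2) y w l) as [xi [Hxi1 Hxi2]].
          { intros z Hz. apply is_derive_Reals. assert (H z <> 0) by (apply Hnz; unfold x1 in *; lra).
            unfold r, T. auto_derive. sides.
            rewrite (D_eq _ _ dH), (D_eq _ _ dHm), R3, R4. field. auto. }
          assert (T xi < 0) by (apply Fw; unfold x1 in *; lra).
          assert (0 < H xi ^ 2) by (apply pow2_gt_0; apply Hnz; unfold x1 in *; lra).
          assert (0 < - T xi / H xi ^ 2) by (apply Rdiv_lt_0_compat; lra).
          nra.
        - rewrite <- e. auto. }
      destruct (HP1 w ltac:(lra)) as [a1 a2]. destruct (HP2 w ltac:(lra)) as [b1 b2].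
      pose proof (Rpower_m1 w k ltac:(lra)). pose proof (Rpower_pos w (k-1)).
      assert (Hrw : r w * w < 4).
      { unfold r. assert (0 < H w) by (pose proof (Rpower_pos w k); lra).
        apply Rmult_lt_reg_r with (H w); auto.
        replace (Hm w / H w * w * H w) with (Hm w * w) by (field; lra). nra. }
      assert (4 / r x1 < w) by lra.
      assert (4 < r x1 * w) by (apply Rmult_lt_reg_r with (/ r x1); [apply Rinv_0_lt_compat; lra|];
                                 replace (r x1 * w * / r x1) with w by (field; lra); unfold Rdiv in *; lra).
      nra.
Qed.
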